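(* For every forward trie $\mathsf{T}_f$ with $n$ nodes, over any alphabet, the suffix tree $\mathsf{STree}(\mathsf{T}_f)$ has $O(n^2)$ nodes and $O(n^2)$ edges. Moreover, there exist forward tries $\mathsf{T}_f$ with $n$ nodes, for arbitrarily large $n$ and over an alphabet of constant size, such that $\mathsf{STree}(\mathsf{T}_f)$ has $\Omega(n^2)$ nodes and $\Omega(n^2)$ edges.
   Context: An alphabet $\Sigma$ is a finite ordered set of characters, and $\sigma=|\Sigma|$. A forward trie $\mathsf{T}_f$ is a rooted tree with $n$ nodes in which every edge is directed from parent to child and labeled by a single character of $\Sigma$, such that the edges leaving any node carry pairwise distinct labels. For nodes $u,v$ with $u$ an ancestor of $v$ (possibly $u=v$), $\mathrm{str}_f(u,v)$ is the string of labels read along the downward path from $u$ to $v$. Define $\mathrm{Suffix}(\mathsf{T}_f)=\{\mathrm{str}_f(u,\ell): \ell \text{ a leaf},\ u \text{ an ancestor of } \ell\}$. For a finite set $S$ of strings, its compact tree is obtained from the trie of all prefixes of strings in $S$ (one node per prefix, the root being the empty string, an edge labeled $a$ from $X$ to $Xa$) by deleting every non-root node that has exactly one child and merging its two incident edges into one edge labeled by the concatenation of their labels. The suffix tree $\mathsf{STree}(\mathsf{T}_f)$ is the compact tree of $\mathrm{Suffix}(\mathsf{T}_f)$. *)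

(* Defs.v *)
From mathcomp Require Import all_boot.
Set Implicit Arguments. Unset Strict Implicit. Unset Printing Implicit Defensive.

Section Tries.
Variable Sigma : finType.
Notation word := (seq Sigma).

(* A forward trie is represented (up to isomorphism) by the duplicate-free
   list of the strings read from the root to each of its nodes: the root is
   the empty string, and the set is closed under taking prefixes.  Edge
   labels out of a node are automatically pairwise distinct. The number of
   nodes is [size T]. *)
Definition is_trie (T : seq word) : Prop :=
  [/\ uniq T, [::] \in T & forall s, s \in T -> forall k, take k s \in T].

Definition sprefix (x y : word) : bool := prefix x y && (size x < size y).

Definition trie_leaves (T : seq word) : seq word :=
  [seq l <- T | ~~ has (sprefix l) T].

(* Suffix(T_f) = { str_f(u, l) : l leaf, u ancestor of l };
   for node strings u = take k l, str_f(u,l) = drop k l. *)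
Definition trie_suffixes (T : seq word) : seq word :=
  [seq drop k l | l <- trie_leaves T, k <- iota 0 (size l).+1].

(* all prefixes of strings of S: the nodes of the (uncompacted) trie of S *)
Definition prefixes (S : seq word) : seq word :=
  undup [seq take k s | s <- S, k <- iota 0 (size s).+1].

Definition nchildren (S : seq word) (x : word) : nat :=
  #|[pred a : Sigma | rcons x a \in prefixes S]|.

Definition ctree_nodes (S : seq word) : seq word :=
  [seq x <- prefixes S | (x == [::]) || (nchildren S x != 1)].

Definition ctree_edges (S : seq word) : seq (word * word) :=
  [seq p <- [seq (x, y) | x <- ctree_nodes S, y <- ctree_nodes S] |
     sprefix p.1 p.2 &&
     ~~ has (fun z => sprefix p.1 z && sprefix z p.2) (ctree_nodes S)].

Definition stree_nodes (T : seq word) : nat := size (ctree_nodes (trie_suffixes T)).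
Definition stree_edges (T : seq word) : nat := size (ctree_edges (trie_suffixes T)).

End Tries.

(* Main.v *)
Require Import Defs.
From mathcomp Require Import all_boot zify.
Set Implicit Arguments. Unset Strict Implicit.

Section Gen.
Variable Sigma : finType.
Notation word := (seq Sigma).

Lemma pref_eq (x y : word) : prefix x y -> x = take (size x) y.
Proof. by rewrite prefixE => /eqP ->. Qed.

Lemma in_prefixes (S : seq word) s k : s \in S -> take k s \in prefixes S.
Proof.
move=> sS; rewrite /prefixes mem_undup; apply/allpairsPdep.
case: (leqP k (size s)) => hk.
  by exists s, k; split; rewrite ?mem_iota.
exists s, (size s); split; rewrite ?mem_iota ?add0n ?ltnSn //.
by rewrite take_size take_oversize // ltnW.
Qed.

Lemma prefixesP (S : seq word) z :
  reflect (exists s k, s \in S /\ z = take k s) (z \in prefixes S).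
Proof.
apply: (iffP idP).
  rewrite /prefixes mem_undup => /allpairsPdep [s [k [sS _ ->]]].
  by exists s, k.
by move=> [s [k [sS ->]]]; apply: in_prefixes.
Qed.

Lemma ctree_nodes_uniq (S : seq word) : uniq (ctree_nodes S).
Proof. by apply: filter_uniq; apply: undup_uniq. Qed.

Lemma ctree_edges_uniq (S : seq word) : uniq (ctree_edges S).
Proof.
apply: filter_uniq; apply: allpairs_uniq; try exact: ctree_nodes_uniq.
by move=> [a b] [c d] _ _ /= ->.
Qed.

Lemma edge_inj (S : seq word) x x' y :
  (x, y) \in ctree_edges S -> (x', y) \in ctree_edges S -> x = x'.
Proof.
have key : forall a a', (a, y) \in ctree_edges S -> (a', y) \in ctree_edges S ->
    size a < size a' -> False.
  move=> a a'; rewrite !mem_filter /= => /andP [/andP [/andP [pa sa] nh] _].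
  move=> /andP [/andP [/andP [pa' sa'] _] ina'] lt.
  move/negP: nh; apply; apply/hasP; exists a'.
    by move/allpairsP: ina' => [[p q] [/= h1 h2 [-> _]]].
  rewrite /sprefix pa' sa' lt !andbT prefixE.
  rewrite {1}(pref_eq pa') -take_min.
  by rewrite (minn_idPl (ltnW lt)) -(pref_eq pa).
move=> h1 h2; case: (ltngtP (size x) (size x')) => c.
- by case: (key _ _ h1 h2 c).
- by case: (key _ _ h2 h1 c).
move: h1 h2; rewrite !mem_filter /= => /andP [/andP [/andP [pa _] _] _].
move=> /andP [/andP [/andP [pa' _] _] _].
by rewrite (pref_eq pa) (pref_eq pa') c.
Qed.

Lemma edges_le_nodes (S : seq word) : size (ctree_edges S) <= size (ctree_nodes S).
Proof.
rewrite -(size_map snd).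
apply: uniq_leq_size.
  rewrite map_inj_in_uniq ?ctree_edges_uniq //.
  move=> [a b] [c d] h1 h2 /= e; subst d.
  by rewrite (edge_inj h1 h2).
move=> y /mapP [[a b] + ->] /=; rewrite mem_filter => /andP [_].
by move/allpairsP => [[p q] [/= _ h ]] [_ ->].
Qed.

Lemma nodes_le_edges (S : seq word) :
  size (ctree_nodes S) <= (size (ctree_edges S)).+1.
Proof.
set C := ctree_nodes S.
have nil_in : forall y, y \in C -> [::] \in C.
  move=> y; rewrite mem_filter => /andP [_] /prefixesP [s [k [sS _]]].
  by rewrite mem_filter eqxx /= -(take0 s) in_prefixes.
have h1 : count (pred1 [::]) C <= 1 by rewrite count_uniq_mem ?ctree_nodes_uniq // leq_b1.
have h2 : size [seq y <- C | predC (pred1 [::]) y] <= size (ctree_edges S).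
  rewrite -(size_map snd (ctree_edges S)).
  apply: uniq_leq_size; first by apply: filter_uniq; apply: ctree_nodes_uniq.
  move=> y; rewrite mem_filter /= => /andP [yn yC].
  have ex : exists i, (i < size y) && (take i y \in C).
    by exists 0; rewrite take0 (nil_in _ yC) andbT lt0n size_eq0.
  have ub : forall i, (i < size y) && (take i y \in C) -> i <= size y.
    by move=> i /andP [/ltnW].
  case: (ex_maxnP ex ub) => m /andP [ms mC] mmax.
  apply/mapP; exists (take m y, y) => //.
  rewrite mem_filter /=; apply/andP; split; last first.
    by apply/allpairsP; exists (take m y, y).
  rewrite /sprefix prefix_take size_take ms ms /=.
  apply/hasP => [[z zC /andP [/andP [pz sz] /andP [pzy szy]]]].
  have : size z <= m by apply: mmax; rewrite szy -(pref_eq pzy).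
  by rewrite leqNgt sz.
rewrite size_filter in h2; rewrite -(count_predC (pred1 [::]) C).
by apply: leq_trans (leq_add h1 h2) _.
Qed.

Lemma prefixes_le (T : seq word) : is_trie T ->
  size (prefixes (trie_suffixes T)) <= size T * size T.
Proof.
move=> [uT nT cT].
rewrite -(size_allpairs (fun u v : word => drop (size u) v) T T).
apply: uniq_leq_size; first exact: undup_uniq.
move=> z /prefixesP [s [k [sS ->]]].
move: sS => /allpairsPdep [l [j [lL _ ->]]].
have lT : l \in T by move: lL; rewrite mem_filter => /andP [].
apply/allpairsP; exists (take j l, take (k + j) l); split; rewrite ?cT //=.
rewrite take_drop size_take; case: ltnP => // hj.
rewrite take_oversize ?drop_oversize //.
by apply: leq_trans hj (leq_addl _ _).
Qed.

End Gen.

Section Low.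
Local Notation Sg := (option bool).
Local Notation a := (Some false).
Local Notation b := (Some true).
Local Notation c := (@None bool).

Definition w k : seq Sg := nseq k a ++ nseq k b.
Definition Tk k : seq (seq Sg) :=
  undup ([seq take t (w k) | t <- iota 0 (2 * k).+1] ++
         [seq rcons (take t (w k)) c | t <- iota 0 (2 * k).+1]).

Lemma size_w k : size (w k) = 2 * k.
Proof. by rewrite /w size_cat !size_nseq; lia. Qed.

Lemma c_notin_w k : c \notin w k.
Proof. by rewrite /w mem_cat !mem_nseq !andbF. Qed.

Lemma memTk k e : reflect (exists t, t <= 2 * k /\
    (e = take t (w k) \/ e = rcons (take t (w k)) c)) (e \in Tk k).
Proof.
rewrite /Tk mem_undup mem_cat; apply: (iffP orP).
  case=> /mapP [t]; rewrite mem_iota add0n ltnS => /andP [_ ht] ->;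
    by exists t; split; [| (left + right)].
move=> [t [ht [->|->]]]; [left | right]; apply/mapP; exists t => //;
  by rewrite mem_iota add0n ltnS.
Qed.

Lemma size_Tk k : size (Tk k) <= (2 * k).+1 + (2 * k).+1.
Proof.
by apply: leq_trans (size_undup _) _; rewrite size_cat !size_map size_iota.
Qed.

Lemma trie_Tk k : is_trie (Tk k).
Proof.
split; first exact: undup_uniq.
  by apply/memTk; exists 0; split => //; left; rewrite take0.
move=> e /memTk [t [ht [->|->]]] k'; apply/memTk.
  by exists (minn k' t); split; [lia | left; rewrite take_min].
have st : size (take t (w k)) = t by rewrite size_takel // size_w.
case: (leqP k' t) => hk.
  exists k'; split; first lia.
  by left; rewrite -cats1 takel_cat ?st // take_takel.
exists t; split => //; right; by rewrite take_oversize // size_rcons st.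
Qed.

Lemma leafTk k t : t <= 2 * k -> rcons (take t (w k)) c \in trie_leaves (Tk k).
Proof.
move=> ht; rewrite /trie_leaves mem_filter; apply/andP; split; last first.
  by apply/memTk; exists t; split => //; right.
apply/hasP => [[e /memTk [t' [ht' ee]] /andP [pe se]]].
have cl : c \in rcons (take t (w k)) c by rewrite mem_rcons inE eqxx.
rewrite (pref_eq pe) in cl.
have := c_notin_w k; rewrite -[_ \notin _]/(~~ _) => /negP; apply.
case: ee => ee; subst e.
  by move: cl => /mem_take /mem_take.
move: se cl; rewrite !size_rcons !size_takel ?size_w // => se.
rewrite -cats1 takel_cat; last by rewrite size_takel ?size_w.
by move=> /mem_take /mem_take.
Qed.

Lemma drop_suff (T : seq (seq Sg)) l m :
  l \in trie_leaves T -> drop m l \in trie_suffixes T.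
Proof.
move=> lL; apply/allpairsPdep.
case: (leqP m (size l)) => hm.
  by exists l, m; split; rewrite ?mem_iota.
exists l, (size l); split; rewrite ?mem_iota ?add0n ?ltnSn //.
by rewrite !drop_oversize // ltnW.
Qed.

Lemma compute_s k i j : 0 < i <= k -> j <= k ->
  drop (k - i) (rcons (take (k + j) (w k)) c) = (nseq i a ++ nseq j b) ++ [:: c].
Proof.
move=> /andP [i0 ik] jk.
rewrite /w take_cat size_nseq ltnNge leq_addr /= addKn take_nseq //.
rewrite -cats1 -!catA drop_cat size_nseq.
have -> : k - i < k by lia.
by rewrite drop_nseq subKn.
Qed.

Lemma nodes_Tk k : 0 < k -> k * k.-1 <= stree_nodes (Tk k).
Proof.
move=> k0.
set S := trie_suffixes (Tk k).
have -> : k * k.-1 = size (iota 1 k) * size (iota 1 k.-1) by rewrite !size_iota.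
rewrite -(size_allpairs (fun i j => nseq i a ++ nseq j b) (iota 1 k) (iota 1 k.-1)).
apply: uniq_leq_size.
  apply: allpairs_uniq; rewrite ?iota_uniq //.
  move=> [i j] [i' j'] _ _ /= e.
  have e1 := congr1 (count (pred1 a)) e.
  have e2 := congr1 (count (pred1 b)) e.
  move: e1 e2; rewrite !count_cat !count_nseq /= !mul1n !mul0n.
  by rewrite !addn0 !add0n => -> ->.
move=> x /allpairsP [[i j] [/= hi hj ->]].
move: hi hj; rewrite !mem_iota => /andP [i1 ik] /andP [j1 jk].
have hi : 0 < i <= k by lia.
have s1S : (nseq i a ++ nseq j b) ++ [:: c] \in S.
  rewrite -(compute_s (k:=k)) //; last lia.
  by apply: drop_suff; apply: leafTk; lia.
have s2S : (nseq i a ++ nseq j.+1 b) ++ [:: c] \in S.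
  rewrite -(compute_s (k:=k)) //; last lia.
  by apply: drop_suff; apply: leafTk; lia.
rewrite mem_filter; apply/andP; split; last first.
  by have := in_prefixes (size (nseq i a ++ nseq j b)) s1S; rewrite take_size_cat.
apply/orP; right.
rewrite /nchildren (cardD1 b) (cardD1 c) !inE /=.
have -> : rcons (nseq i a ++ nseq j b) b \in prefixes S.
  rewrite -cats1 -catA (_ : nseq j b ++ [:: b] = nseq j.+1 b); last by rewrite -addn1 nseqD.
  by have := in_prefixes (size (nseq i a ++ nseq j.+1 b)) s2S; rewrite take_size_cat.
have -> : rcons (nseq i a ++ nseq j b) c \in prefixes S.
  by rewrite -cats1 -(take_size (_ ++ _)) in_prefixes.
by [].
Qed.

End Low.

Lemma part2 : exists (Sigma : finType) (d : nat), 0 < d /\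
     forall N : nat, exists T : seq (seq Sigma),
       [/\ is_trie T, N <= size T,
           (size T) ^ 2 <= d * stree_nodes T &
           (size T) ^ 2 <= d * stree_edges T].
Proof.
exists (option bool : finType), 50; split => // N.
exists (Tk (N + 3)).
have hT := trie_Tk (N + 3).
have h1 := size_Tk (N + 3).
have h2 := @nodes_Tk (N + 3) (ltac:(lia)).
have h3 : stree_nodes (Tk (N + 3)) <= size (Tk (N + 3)) * size (Tk (N + 3)).
  rewrite /stree_nodes; apply: leq_trans (prefixes_le hT).
  by rewrite size_filter count_size.
have h4 := nodes_le_edges (trie_suffixes (Tk (N + 3))).
rewrite -/(stree_nodes _) -/(stree_edges _) in h4.
move: h1 h2 h3 h4.
set n := size _; set m := stree_nodes _; set e := stree_edges _.
move=> h1 h2 h3 h4.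
split => //; rewrite ?expnS ?expn1; nia.
Qed.
Lemma part1 : exists c : nat, forall (Sigma : finType) (T : seq (seq Sigma)),
     is_trie T ->
     stree_nodes T <= c * (size T) ^ 2 /\ stree_edges T <= c * (size T) ^ 2.
Proof.
exists 1 => Sigma T hT.
have h : stree_nodes T <= 1 * size T ^ 2.
  rewrite mul1n expnS expn1 /stree_nodes.
  apply: leq_trans (prefixes_le hT); by rewrite size_filter count_size.
split => //; apply: leq_trans h; exact: edges_le_nodes.
Qed.

Theorem theorem1 :
  (* upper bound O(n^2), uniformly over all alphabets *)
  (exists c : nat, forall (Sigma : finType) (T : seq (seq Sigma)),
     is_trie T ->
     stree_nodes T <= c * (size T) ^ 2 /\ stree_edges T <= c * (size T) ^ 2)
  /\
  (* lower bound Omega(n^2) for arbitrarily large n, constant-size alphabet *)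
  (exists (Sigma : finType) (d : nat), 0 < d /\
     forall N : nat, exists T : seq (seq Sigma),
       [/\ is_trie T, N <= size T,
           (size T) ^ 2 <= d * stree_nodes T &
           (size T) ^ 2 <= d * stree_edges T]).
Proof. exact: (conj part1 part2). Qed.
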